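(* Let $U$ be a countably infinite universe, $\mathcal{C}=(L_1,L_2,\ldots)$ a countably infinite collection of languages over $U$, let $m^\star_n(L_i)$ be computed by the Noisy Procedure in the context, and fix a non-decreasing $f:\mathbb{N}\to\mathbb{N}$ with $\lim_{t\to\infty}f(t)=\infty$. Then the Noisy Algorithm in the context (with this $f$) noisily non-uniformly generates from $\mathcal{C}$ with generation times $t^\star_n(L_i)=\max(g(n,i),m^\star_n(L_i)+1)$, where $g(n,i)$ is the smallest $j$ with $f(j)\ge p(n,i)$ and $p(n,i)$ is the position of the pair $(n,i)$ in the diagonal order; that is, for every $n\ge0$, every $i\ge1$, every enumeration of $L_i$ at noise level $n$, and every $t$ with $|S_t|\ge t^\star_n(L_i)$, the output $z_t$ belongs to $L_i\setminus S_t$.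
   Context: A language is an infinite subset of $U$; a collection is a sequence of languages (repetitions allowed, entries distinguished by index). For a language $L$ and integer $n\ge0$, an enumeration of $L$ at noise level $n$ is a sequence $x_1,x_2,\ldots$ of elements of $U$ such that every $x\in L$ equals some $x_t$ and $\sum_{t\ge1}\mathbf{1}[x_t\notin L]\le n$. A generating algorithm at each time $t\ge1$ receives $x_1,\ldots,x_t$ and outputs $z_t\in U$; $S_t$ is the set of distinct strings among $x_1,\ldots,x_t$. For a set $T$, a language $L$ and integer $a\ge0$, $T$ is $a$-contained in $L$ if $\sum_{x\in T}\mathbf{1}[x\notin L]\le a$. An algorithm noisily non-uniformly generates from $\mathcal{C}$ with generation times $t_n(L_i)$ if for all $n\ge0$, $i\ge1$ and every enumeration of $L_i$ at noise level $n$, $z_t\in L_i\setminus S_t$ whenever $|S_t|\ge t_n(L_i)$. Diagonal order: the pairs $(n,i)$, $n\ge0$, $i\ge1$, are ordered as $(0,1),(1,1),(0,2),(2,1),(1,2),(0,3),(3,1),\ldots$, i.e. for $n'=0,1,2,\ldots$ and $h=0,\ldots,n'$ the pair $(n'-h,h+1)$. For each pair $(a,b)$ there is an entry $L_{a,b}$, a copy of $L_b$ labelled by $(a,b)$. Noisy Procedure. Set $\mathcal{C}'_0=()$. For $l=1,2,\ldots$, let $(n,i)$ be the $l$-th pair in diagonal order; append the entry $L_{n,i}$ to the end of $\mathcal{C}'_{l-1}$ to get $\mathcal{C}'_l=(L'_1,\ldots,L'_l)$ and set $j=l$. Repeat: (A) let $T$ be a finite subset of $U$ of largest size for which there exists a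 subcollection $\mathcal{D}$ of the entries $(L'_1,\ldots,L'_j)$ with: $\mathcal{D}$ includes $L'_j$; for every entry $L_{a,b}\in\mathcal{D}$, $T$ is $a$-contained in $L_b$; and $\bigcap_{L_{a,b}\in\mathcal{D}}L_b$ is finite; let $\mathcal{C}_{\mathrm{chk}}$ be such a $\mathcal{D}$ and $m_{\mathrm{chk}}=|T|$ (with $m_{\mathrm{chk}}=0$ if no such $\mathcal{D}$ exists). (B) If $j\le1$, or $m_{\mathrm{chk}}>m^\star_a(L_b)$ where $L'_{j-1}=L_{a,b}$, stop. (C) Otherwise swap positions $j-1$ and $j$ in $\mathcal{C}'_l$, set $j\leftarrow j-1$, return to (A). When the loop stops, set $T(L_{n,i})=T$, $\mathcal{C}(L_{n,i})=\mathcal{C}_{\mathrm{chk}}$, $m^\star_n(L_i)=m_{\mathrm{chk}}$. Noisy Algorithm (parameter $f$). At time $t$, run the first $f(t)$ steps of the Noisy Procedure to get $\mathcal{C}'_{f(t)}=(L'_1,\ldots,L'_{f(t)})$. Initialize $I_t=()$; for $j=1,\ldots,f(t)$ in order, writing $L'_j=L_{a,b}$: if $S_t$ is $a$-contained in $L_b$ and $|\bigcap_{L\in I_t\cup\{L_b\}}L|=\infty$, append $L_b$ to $I_t$. If $I_t$ is empty output an arbitrary string of $U\setminus S_t$; otherwise output a string of $(\bigcap_{L\in I_t}L)\setminus S_t$. *)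

(* Defs.v *)
From Stdlib Require Import ClassicalEpsilon.
From mathcomp Require Import all_boot.
From mathcomp Require Import boolp.

Set Implicit Arguments.
Unset Strict Implicit.
Unset Printing Implicit Defensive.

Section NoisyDefs.

Variable U : countType.

Definition finU (A : U -> Prop) : Prop := exists s : seq U, forall x, A x -> x \in s.

(* T (a finite set, given as a duplicate-free list) is a-contained in L. *)
Definition acontained (T : seq U) (L : U -> Prop) (a : nat) : bool :=
  count (fun x => ~~ `[< L x >]) T <= a.

Definition pairs_upto (N : nat) : seq (nat * nat) :=
  flatten [seq [seq (n' - h, h.+1) | h <- iota 0 n'.+1] | n' <- iota 0 N].

Definition diag_pair (l : nat) : nat * nat := nth (0, 1) (pairs_upto l) l.-1.

Definition diag_pos (n i : nat) : nat := (index (n, i) (pairs_upto (n + i))).+1.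

Variable L : nat -> U -> Prop.   (* the collection; L_i for i >= 1 *)

(* An entry L_{a,b} is represented by its label (a,b); a collection of
   entries C' = (L'_1, ..., L'_l) by the list of labels.  The entry at
   1-based position k of C is nth (0,0) C k.-1. *)
Definition entry (C : seq (nat * nat)) (k : nat) : nat * nat := nth (0, 0) C k.-1.

Definition inter_pos (C : seq (nat * nat)) (D : seq nat) : U -> Prop :=
  fun x => forall k, k \in D -> L (entry C k).2 x.

(* m is the size of some T as in step (A), for some admissible D among the
   entries L'_1, ..., L'_j (subcollections given by sets of positions). *)
Definition chk_size (C : seq (nat * nat)) (j m : nat) : Prop :=
  exists D : seq nat,
    [/\ all (fun k => 0 < k <= j) D, j \in D,
        finU (inter_pos C D) &
        exists T : seq U, [/\ uniq T, size T = m &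
          forall k, k \in D -> acontained T (L (entry C k).2) (entry C k).1]].

Definition mchk (C : seq (nat * nat)) (j : nat) : nat :=
  epsilon (inhabits 0%N) (fun m =>
    (chk_size C j m /\ forall m', chk_size C j m' -> m' <= m) \/
    ((forall m', ~ chk_size C j m') /\ m = 0)).

(* swap 1-based positions j-1 and j *)
Definition swap_prev (C : seq (nat * nat)) (j : nat) : seq (nat * nat) :=
  take (j - 2) C ++ [:: entry C j; entry C j.-1] ++ drop j C.

Fixpoint proc_loop (fuel : nat) (ms : nat * nat -> nat)
    (C : seq (nat * nat)) (j : nat) : seq (nat * nat) * nat :=
  let mc := mchk C j in
  match fuel with
  | 0 => (C, mc)
  | fuel'.+1 =>
      if (j <= 1) || (ms (entry C j.-1) < mc) then (C, mc)
      else proc_loop fuel' ms (swap_prev C j) j.-1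
  end.

(* State after l steps: the collection C'_l and the values m*_a(L_b) of
   all inserted entries (a,b) (0 for entries not yet inserted). *)
Fixpoint proc_state (l : nat) : seq (nat * nat) * (nat * nat -> nat) :=
  match l with
  | 0 => ([::], fun _ => 0)
  | l'.+1 =>
      let s := proc_state l' in
      let q := diag_pair l in
      let r := proc_loop l s.2 (rcons s.1 q) l in
      (r.1, fun e => if e == q then r.2 else s.2 e)
  end.

(* m*_n(L_i), fixed at the step where L_{n,i} is inserted *)
Definition mstar (n i : nat) : nat := (proc_state (diag_pos n i)).2 (n, i).

(* x_1, x_2, ... is given as x : nat -> U (x 0 unused). *)
Definition enumeration (A : U -> Prop) (n : nat) (x : nat -> U) : Prop :=
  (forall y, A y -> exists t, 0 < t /\ x t = y) /\
  (forall N, count (fun t => ~~ `[< A (x t) >]) (iota 1 N) <= n).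

Definition S_t (x : nat -> U) (t : nat) : seq U := undup [seq x k | k <- iota 1 t].

Definition inter_idx (I : seq nat) : U -> Prop := fun y => forall b, b \in I -> L b y.

Definition I_step (S : seq U) (I : seq nat) (e : nat * nat) : seq nat :=
  if `[< acontained S (L e.2) e.1 /\ ~ finU (inter_idx (rcons I e.2)) >]
  then rcons I e.2 else I.

Definition I_t (f : nat -> nat) (x : nat -> U) (t : nat) : seq nat :=
  foldl (I_step (S_t x t)) [::] (proc_state (f t)).1.

Definition alg_output (f : nat -> nat) (x : nat -> U) (t : nat) (z : U) : Prop :=
  if I_t f x t is [::] then z \notin S_t x t
  else inter_idx (I_t f x t) z /\ z \notin S_t x t.

End NoisyDefs.

(* Main.v *)
Require Import Defs.
From Stdlib Require Import ClassicalEpsilon Classical.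
From mathcomp Require Import all_boot.
From mathcomp Require Import boolp.
From mathcomp Require Import zify.
Set Warnings "-notation-overridden".

Definition dg (n' : nat) : seq (nat * nat) := [seq (n' - h, h.+1) | h <- iota 0 n'.+1].

Lemma pairs_uptoS N : pairs_upto N.+1 = pairs_upto N ++ dg N.
Proof.
by rewrite /pairs_upto -addn1 iotaD map_cat flatten_cat /= cats0.
Qed.

Lemma pairs_prefix N M : N <= M -> exists r, pairs_upto M = pairs_upto N ++ r.
Proof.
move=> /subnK <-; elim: (M - N) => [|k [r IH]]; first by exists [::]; rewrite cats0.
by exists (r ++ dg (k + N)); rewrite addSn pairs_uptoS IH catA.
Qed.

Lemma size_pairs N : N <= size (pairs_upto N).
Proof.
elim: N => [|N IH] //; rewrite pairs_uptoS size_cat /dg size_map size_iota; lia.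
Qed.

Lemma mem_pairs N a b : (a, b) \in pairs_upto N -> 0 < b /\ a + b <= N.
Proof.
elim: N => [|N IH] //; rewrite pairs_uptoS mem_cat => /orP [/IH|]; first lia.
move=> /mapP [h]; rewrite mem_iota => /andP [_ hh] [-> ->]; lia.
Qed.

Lemma uniq_pairs N : uniq (pairs_upto N).
Proof.
elim: N => [|N IH] //; rewrite pairs_uptoS cat_uniq IH andTb; apply/andP; split.
  apply/hasPn => -[a b] /mapP [h]; rewrite mem_iota => /andP [_ hh] [-> ->].
  apply/negP => /mem_pairs; lia.
rewrite /dg map_inj_in_uniq ?iota_uniq // => h1 h2 _ _ [_ ->] //.
Qed.

Lemma pair_in n i : 0 < i -> (n, i) \in pairs_upto (n + i).
Proof.
move=> hi; have -> : n + i = (n + i).-1.+1 by lia.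
rewrite pairs_uptoS mem_cat; apply/orP; right; apply/mapP; exists i.-1.
  rewrite mem_iota; lia.
congr pair; lia.
Qed.

Lemma nth_pairs N M k : k < size (pairs_upto N) -> k < size (pairs_upto M) -> nth (0,1) (pairs_upto N) k = nth (0,1) (pairs_upto M) k.
Proof.
wlog: N M / N <= M => [H|hNM] hN hM.
  case: (leqP N M) => h; first exact: H.
  by symmetry; apply: H => //; lia.
have [r ->] := @pairs_prefix _ _ hNM.
by rewrite nth_cat hN.
Qed.

Lemma diag_pairK n i : 0 < i -> diag_pair (diag_pos n i) = (n, i).
Proof.
move=> hi; rewrite /diag_pair /diag_pos /=.
have hin := @pair_in n i hi.
have hlt := hin; rewrite -index_mem in hlt.
rewrite (@nth_pairs _ (n + i)) ?nth_index //.
exact: leq_trans (size_pairs _).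
Qed.

Lemma diag_pair_inj l1 l2 : 0 < l1 -> 0 < l2 -> diag_pair l1 = diag_pair l2 -> l1 = l2.
Proof.
move=> h1 h2; rewrite /diag_pair.
have s1 := size_pairs l1; have s2 := size_pairs l2; have s3 := size_pairs (maxn l1 l2).
have a1 : l1.-1 < size (pairs_upto l1) by lia.
have a2 : l2.-1 < size (pairs_upto l2) by lia.
have a3 : l1.-1 < size (pairs_upto (maxn l1 l2)) by lia.
have a4 : l2.-1 < size (pairs_upto (maxn l1 l2)) by lia.
rewrite (@nth_pairs _ _ _ a1 a3) (@nth_pairs _ _ _ a2 a4).
move/eqP; rewrite nth_uniq ?uniq_pairs //.
move/eqP; lia.
Qed.
Lemma finU_sub {U : countType} {A B : U -> Prop} : finU A -> (forall x, B x -> A x) -> finU B.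
Proof. by move=> [s hs] h; exists s => x /h /hs. Qed.

Definition chkD {U : countType} (L : nat -> U -> Prop) C j D m :=
  [/\ all (fun k => 0 < k <= j) D, j \in D, finU (inter_pos L C D) &
        exists T : seq U, [/\ uniq T, size T = m &
          forall k, k \in D -> acontained T (L (entry C k).2) (entry C k).1]].

Lemma chkD_map {U : countType} (L : nat -> U -> Prop) C C' j j' D m (sg : nat -> nat) :
  chkD L C' j D m -> (forall d, d \in D -> entry C' d = entry C (sg d)) ->
  all (fun k => 0 < k <= j') (map sg D) -> j' \in map sg D -> chk_size L C j' m.
Proof.
move=> [_ _ hf [T [hu hs hT]]] he ha hj; exists (map sg D); split => //.
  refine (finU_sub hf _) => x hx k hk; rewrite he //; apply: hx; exact: map_f.
exists T; split => // k /mapP [d hd ->]; rewrite -he //; exact: hT.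
Qed.

Definition sw (j d : nat) := if d == j then j.-1 else if d == j.-1 then j else d.

Lemma entry_swap C j d : 1 < j <= size C -> 0 < d -> entry (swap_prev C j) d = entry C (sw j d).
Proof.
move=> hj hd; rewrite /entry /swap_prev /sw.
have hst : size (take (j - 2) C) = j - 2 by rewrite size_take; case: ifP => //; lia.
rewrite nth_cat hst.
have [->|ne1] := eqVneq d j.
  rewrite ?eqxx; have -> : j.-1 < j - 2 = false by lia.
  by have -> : j.-1 - (j - 2) = 1 by lia.
rewrite ?(negbTE ne1).
have [->|ne2] := eqVneq d j.-1.
  rewrite ?eqxx; have -> : j.-2 < j - 2 = false by lia.
  by have -> : j.-2 - (j - 2) = 0 by lia.
rewrite ?(negbTE ne2).
case: ifP => h1; first by rewrite nth_take.
have -> : d.-1 - (j - 2) = (d.-1 - j).+2 by lia.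
by rewrite /= nth_drop; congr nth; lia.
Qed.

Lemma size_swap C j : 1 < j <= size C -> size (swap_prev C j) = size C.
Proof.
move=> hj; rewrite /swap_prev !size_cat size_take size_drop /=; case: ifP; lia.
Qed.

Lemma perm_swap C j : 1 < j <= size C -> perm_eq (swap_prev C j) C.
Proof.
move=> hj; rewrite /swap_prev /entry.
rewrite -[X in perm_eq _ X](cat_take_drop (j - 2) C) perm_cat2l.
rewrite (@drop_nth _ (0,0) (j - 2)); last lia.
rewrite (@drop_nth _ (0,0) (j - 2).+1); last lia.
have -> : j.-1 = (j - 2).+1 by lia.
have -> : (j - 2).+2 = j by lia.
by apply/permP => p /=; rewrite addnCA.
Qed.

Lemma count_cover (X : eqType) (I : finType) (P : pred I) (p : pred X) (q : I -> pred X) (T : seq X) :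
  (forall x, x \in T -> p x -> exists k, P k && q k x) ->
  count p T <= \sum_(k | P k) count (q k) T.
Proof.
elim: T => [|x T IH] H /=; first by rewrite big1.
rewrite big_split /=; apply: leq_add; last first.
  by apply: IH => y hy; apply: H; rewrite inE hy orbT.
case hp: (p x) => //.
have [k /andP [hk hq]] := H x (mem_head _ _) hp.
by rewrite (bigD1 k) //= hq.
Qed.

Lemma chk_bound {U : countType} (L : nat -> U -> Prop) C j :
  exists B, forall m, chk_size L C j m -> m <= B.
Proof.
pose interA (A : {set 'I_j}) x := forall k : 'I_j, k \in A -> L (entry C k.+1).2 x.
pose cov A := epsilon (inhabits [::]) (fun s : seq U => forall x, interA A x -> x \in s).
exists (\sum_(A : {set 'I_j}) size (cov A) + \sum_(k < j) (entry C k.+1).1).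
move=> m [D [hall hj hf [T [hu <- hT]]]].
pose A := [set k : 'I_j | k.+1 \in D].
have hA : forall x, interA A x -> inter_pos L C D x.
  move=> x hx k hk; have /andP [k0 kj] := allP hall k hk.
  have hk' : k.-1 < j by lia.
  have := hx (Ordinal hk'); rewrite inE /= (prednK k0); exact.
have hcov : forall x, interA A x -> x \in cov A.
  apply: (epsilon_spec (inhabits [::]) (fun s : seq U => forall x, interA A x -> x \in s)).
  have [s hs] := finU_sub hf hA; by exists s.
rewrite -(count_predC (mem (cov A)) T); apply: leq_add.
  apply: (@leq_trans (size (cov A))).
    rewrite -size_filter; apply: uniq_leq_size; first exact: filter_uniq.
    by move=> y; rewrite mem_filter => /andP [].
  by rewrite (bigD1 A) //=; apply: leq_addr.
apply: (@leq_trans (\sum_(k < j | k \in A) count (fun x => ~~ `[< L (entry C k.+1).2 x >]) T)).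
  apply: count_cover => x _ /= hx.
  have : ~ interA A x by move=> /hcov; rewrite (negbTE hx).
  move=> /not_all_ex_not [k hk']; have [hk hL] := imply_to_and _ _ hk'.
  exists k; rewrite hk /=.
  by apply/asboolPn.
apply: (@leq_trans (\sum_(k < j | k \in A) (entry C k.+1).1)).
  apply: leq_sum => k; rewrite inE => hk; exact: (hT _ hk).
by rewrite [X in _ <= X](bigID (fun k => k \in A)) /=; apply: leq_addr.
Qed.

Lemma mchk_ge (U : countType) (L : nat -> U -> Prop) C j m :
  chk_size L C j m -> m <= mchk L C j.
Proof.
move=> hm; have [B hB] := chk_bound (U:=U) L C j.
have [M [hM hmax]] : exists M, chk_size L C j M /\ forall m', chk_size L C j m' -> m' <= M.
  have ex : exists i, (fun m => `[< chk_size L C j m >]) i by exists m; apply/asboolP.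
  have ub : forall i, (fun m => `[< chk_size L C j m >]) i -> i <= B by move=> i /asboolP /hB.
  case: (ex_maxnP ex ub) => i /asboolP hi himax; exists i; split => // m' hm'.
  by apply: himax; apply/asboolP.
have := epsilon_spec (inhabits 0) (fun m0 =>
    (chk_size L C j m0 /\ forall m', chk_size L C j m' -> m' <= m0) \/
    ((forall m', ~ chk_size L C j m') /\ m0 = 0)) (ex_intro _ M (or_introl (conj hM hmax))).
rewrite /mchk; case => [[_ h]|[h _]]; [exact: h | by exfalso; exact: h m hm].
Qed.

Definition LInv {U : countType} (L : nat -> U -> Prop) (ms : nat * nat -> nat) q C j :=
  [/\ 0 < j <= size C, entry C j = q &
      forall k, 0 < k <= size C -> k != j -> forall m, chk_size L C k m -> m <= ms (entry C k)].

Lemma sw_cases j d : 1 < j ->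
  [\/ d = j /\ sw j d = j.-1, d = j.-1 /\ sw j d = j | d <> j /\ d <> j.-1 /\ sw j d = d].
Proof.
move=> hj; rewrite /sw; have [->|h1] := eqVneq d j; first by constructor 1.
have [->|h2] := eqVneq d j.-1; first by constructor 2.
by constructor 3; split; [apply/eqP|split; [apply/eqP|]].
Qed.

Lemma swap_step {U : countType} (L : nat -> U -> Prop) ms q C j :
  LInv L ms q C j -> 1 < j -> mchk L C j <= ms (entry C j.-1) ->
  LInv L ms q (swap_prev C j) j.-1.
Proof.
move=> [hj hq hk] j1 hle.
have hjs : 1 < j <= size C by lia.
have hsz := @size_swap _ _ hjs.
have es := @entry_swap _ _ ^~ hjs.
split.
- rewrite hsz; lia.
- rewrite es; last lia.
  by rewrite /sw (_ : (j.-1 == j) = false) ?eqxx //; apply/negbTE; lia.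
rewrite hsz => k hk0 hkj m [D hD].
have hall : all (fun k0 => 0 < k0 <= k) D by case: hD.
have hkD : k \in D by case: hD.
have hed : forall d, d \in D -> entry (swap_prev C j) d = entry C (sw j d).
  by move=> d hd; apply: es; have /andP [] := allP hall d hd.
rewrite es; last lia.
have [ekj|nkj] := eqVneq k j.
- subst k; rewrite /sw eqxx.
  case hjD: (j \in map (sw j) D).
  + apply: leq_trans hle; apply: mchk_ge.
    apply: (@chkD_map U L C (swap_prev C j) j j D m (sw j) hD hed) => //.
    apply/allP => y /mapP [d hd ->]; have /andP [d0 dj] := allP hall d hd.
    by case: (@sw_cases j d j1) => [[_ ->]|[_ ->]|[_ [_ ->]]]; lia.
  + apply: (hk j.-1); [lia | apply/eqP; lia |].
    apply: (@chkD_map U L C (swap_prev C j) _ _ D m (sw j) hD hed).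
      apply/allP => y /mapP [d hd ->]; have /andP [d0 dj] := allP hall d hd.
      case: (@sw_cases j d j1) => [[_ e]|[_ e]|[hdj [_ e]]]; rewrite e; try lia.
      by have := map_f (sw j) hd; rewrite e hjD.
    by apply/mapP; exists j => //; rewrite /sw eqxx.
- have hskk : sw j k = k.
    by case: (@sw_cases j k j1) => [[e _]|[e _]|[_ [_ ->]]] //; [move/eqP: nkj | move/eqP: hkj].
  rewrite hskk; apply: (hk k); [lia | exact: nkj |].
  apply: (@chkD_map U L C (swap_prev C j) _ _ D m (sw j) hD hed); last by apply/mapP; exists k.
  apply/allP => y /mapP [d hd ->]; have /andP [d0 dk] := allP hall d hd.
  case: (@sw_cases j d j1) => [[e ->]|[e ->]|[_ [_ ->]]]; try lia.
Qed.

Lemma loop_ok {U : countType} (L : nat -> U -> Prop) fuel ms q C j :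
  LInv L ms q C j -> exists C' j', proc_loop L fuel ms C j = (C', mchk L C' j') /\
    LInv L ms q C' j' /\ perm_eq C' C.
Proof.
elim: fuel C j => [|fuel IH] C j hI /=; first by exists C, j.
case: ifP => h; first by exists C, j.
move/norP: h => [h1 h2].
have hj : 1 < j by lia.
have hle : mchk L C j <= ms (entry C j.-1) by lia.
have [C' [j' [e [hI' hp]]]] := IH _ _ (@swap_step _ _ _ _ _ _ hI hj hle).
exists C', j'; split => //; split => //.
apply: (perm_trans hp); apply: perm_swap.
by case: hI => ? _ _; lia.
Qed.

Lemma diag_uniq l : uniq (map diag_pair (iota 1 l)).
Proof.
rewrite map_inj_in_uniq ?iota_uniq // => a b; rewrite !mem_iota => ha hb.
apply: diag_pair_inj; lia.
Qed.

Definition PInv {U : countType} (L : nat -> U -> Prop) l :=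
  perm_eq (proc_state L l).1 (map diag_pair (iota 1 l)) /\
  forall k, 0 < k <= size (proc_state L l).1 -> forall m,
    chk_size L (proc_state L l).1 k m -> m <= (proc_state L l).2 (entry (proc_state L l).1 k).

Lemma proc_ok {U : countType} (L : nat -> U -> Prop) l : PInv L l.
Proof.
elim: l => [|l [hp hI]]; first by split => //= k; lia.
rewrite /PInv.
have -> : proc_state L l.+1 =
  ((proc_loop L l.+1 (proc_state L l).2 (rcons (proc_state L l).1 (diag_pair l.+1)) l.+1).1,
   fun e => if e == diag_pair l.+1 then
     (proc_loop L l.+1 (proc_state L l).2 (rcons (proc_state L l).1 (diag_pair l.+1)) l.+1).2
     else (proc_state L l).2 e) by [].
move: hp hI; set s := proc_state L l; set q := diag_pair l.+1 => hp hI.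
have hu : uniq s.1 by rewrite (perm_uniq hp) diag_uniq.
have hsz : size s.1 = l by rewrite (perm_size hp) size_map size_iota.
have hq : q \notin s.1.
  rewrite (perm_mem hp); apply/mapP => -[d]; rewrite mem_iota => hd e.
  have : l.+1 = d by apply: diag_pair_inj => //; lia.
  lia.
have hI0 : LInv L s.2 q (rcons s.1 q) l.+1.
  split.
  - rewrite size_rcons hsz; lia.
  - by rewrite /entry /= nth_rcons hsz ltnn eqxx.
  rewrite size_rcons hsz => k hk hkl m [D hD].
  have hall : all (fun k0 => 0 < k0 <= k) D by case: hD.
  have hkD : k \in D by case: hD.
  have hed : forall d, d \in D -> entry (rcons s.1 q) d = entry s.1 (id d).
    move=> d hd; have /andP [d0 dk] := allP hall d hd.
    rewrite /entry nth_rcons hsz; have -> // : d.-1 < l.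
    move/eqP: hkl; lia.
  have -> : entry (rcons s.1 q) k = entry s.1 k.
    rewrite /entry nth_rcons hsz; have -> // : k.-1 < l.
    move/eqP: hkl; lia.
  apply: (hI k); first by rewrite hsz; move/eqP: hkl; lia.
  apply: (@chkD_map U L s.1 (rcons s.1 q) _ _ D m id hD hed); rewrite map_id //.
have [C' [j' [-> [[hj' hqj hkk] hp']]]] := @loop_ok _ _ l.+1 _ _ _ _ hI0.
rewrite /=; split.
  apply: (perm_trans hp').
  have ei : iota 1 l.+1 = rcons (iota 1 l) l.+1 by rewrite -cats1 -(addn1 l) iotaD add1n addn1.
  rewrite -[diag_pair 1 :: _]/(map diag_pair (iota 1 l.+1)) ei map_rcons -!cats1 perm_cat2r //.
move=> k hk m hm.
have hu' : uniq C' by rewrite (perm_uniq hp') rcons_uniq hq hu.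
have [ekj|nkj] := eqVneq k j'.
  subst k; rewrite hqj eqxx; exact: mchk_ge.
have -> : (entry C' k == q) = false.
  have a1 : k.-1 < size C' by lia.
  have a2 : j'.-1 < size C' by lia.
  rewrite -hqj /entry nth_uniq //.
  apply/negbTE; move/eqP: nkj; lia.
exact: hkk.
Qed.

Lemma mstar_stable {U : countType} (L : nat -> U -> Prop) n i l : 0 < i ->
  diag_pos n i <= l -> (proc_state L l).2 (n, i) = mstar L n i.
Proof.
move=> hi; elim: l => [|l IH]; first by rewrite /diag_pos.
rewrite leq_eqVlt => /orP [/eqP <- //|hlt].
rewrite -IH //.
rewrite /= (_ : ((n, i) == diag_pair l.+1) = false) //.
apply/negP => /eqP e.
have : diag_pos n i = l.+1 by apply: diag_pair_inj => //; rewrite diag_pairK.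
lia.
Qed.

Lemma greedy {U : countType} (L : nat -> U -> Prop) (S : seq U) C r :
  r <= size C -> ~ finU (inter_idx L [::]) ->
  exists D, [/\ foldl (I_step L S) [::] (take r C) = map (fun k => (entry C k).2) D,
    all (fun k => 0 < k <= r) D,
    (forall k, k \in D -> acontained S (L (entry C k).2) (entry C k).1) &
    ~ finU (inter_idx L (foldl (I_step L S) [::] (take r C)))].
Proof.
move=> + h0; elim: r => [|r IH] hr.
  by exists [::]; rewrite take0.
have [D [eI hall hac hnf]] := IH (ltnW hr).
rewrite (take_nth (0,0) hr) foldl_rcons eI.
rewrite /I_step; case: asboolP => [[ha hf]|hn].
  exists (rcons D r.+1); split.
  - by rewrite map_rcons.
  - apply/allP => k; rewrite mem_rcons in_cons => /orP [/eqP -> //|/(allP hall) /=]; lia.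
  - move=> k; rewrite mem_rcons in_cons => /orP [/eqP -> |/hac //]; exact: ha.
  - exact: hf.
exists D; split => //; last by rewrite -eI.
by apply/allP => k /(allP hall) /=; lia.
Qed.

Lemma foldl_mono {U : countType} (L : nat -> U -> Prop) (S : seq U) s I0 b :
  b \in I0 -> b \in foldl (I_step L S) I0 s.
Proof.
elim: s I0 => [|e s IH] I0 hb //=; apply: IH.
by rewrite /I_step; case: asboolP => // _; rewrite mem_rcons in_cons hb orbT.
Qed.

Theorem mainTheorem6 (U : countType)
    (U_infinite : forall s : seq U, exists u, u \notin s)
    (L : nat -> U -> Prop)
    (L_infinite : forall i, 0 < i -> ~ finU (L i))
    (f : nat -> nat)
    (f_mono : forall a b, a <= b -> f a <= f b)
    (f_lim : forall M, exists t, M <= f t) :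
  forall (n i : nat), 0 < i ->
  forall x : nat -> U, enumeration (L i) n x ->
  forall g : nat, diag_pos n i <= f g -> (forall j, j < g -> f j < diag_pos n i) ->
  forall t : nat, 0 < t ->
  maxn g (mstar L n i).+1 <= size (S_t x t) ->
  forall z : U, alg_output L f x t z ->
  L i z /\ z \notin S_t x t.
Proof.
move=> n i hi x [_ hx] g hg _ t ht hmax z.
set S := S_t x t.
have hS : size S <= t by rewrite /S /S_t (leq_trans (size_undup _)) // size_map size_iota.
have hgS : g <= size S by move: hmax; rewrite geq_max => /andP [].
have hmS : (mstar L n i).+1 <= size S by move: hmax; rewrite geq_max => /andP [].
have hft : diag_pos n i <= f t by apply: (leq_trans hg); apply: f_mono; lia.
have [hp hI] := proc_ok L (f t).
set C := (proc_state L (f t)).1 in hp hI.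
have hms : (proc_state L (f t)).2 (n, i) = mstar L n i by apply: mstar_stable.
have hin : (n, i) \in C.
  rewrite (perm_mem hp) -(@diag_pairK n i hi); apply: map_f.
  rewrite mem_iota; have : 0 < diag_pos n i by []. lia.
set r := index (n, i) C.
have hr : r < size C by rewrite index_mem.
have hent : entry C r.+1 = (n, i) by rewrite /entry /= nth_index.
have h0 : ~ finU (inter_idx L [::]).
  move=> [s hs]; have [u hu] := U_infinite s; move/negP: hu; apply; exact: hs.
have [D [eI hall hac hnf]] := @greedy _ L S C r (ltnW hr) h0.
have hacS : acontained S (L i) n.
  rewrite /acontained /S /S_t (leq_trans (count_undup _ _)) // count_map; exact: hx.
have hstep : I_step L S (foldl (I_step L S) [::] (take r C)) (n, i) =
    rcons (foldl (I_step L S) [::] (take r C)) i.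
  rewrite /I_step; case: asboolP => // hn; exfalso; apply: hn; split => // hfin.
  have hchk : chk_size L C r.+1 (size S).
    exists (rcons D r.+1); split.
    - apply/allP => k; rewrite mem_rcons in_cons => /orP [/eqP -> //|/(allP hall) /=]; lia.
    - by rewrite mem_rcons mem_head.
    - refine (finU_sub hfin _) => y hy b; rewrite mem_rcons in_cons => /orP [/eqP ->|].
        by have := hy r.+1; rewrite hent mem_rcons mem_head => /(_ isT).
      rewrite eI => /mapP [k hk ->]; apply: hy; rewrite mem_rcons in_cons hk orbT //.
    - exists S; split => //; first exact: undup_uniq.
      move=> k; rewrite mem_rcons in_cons => /orP [/eqP ->|/hac //].
      by rewrite hent.
  have := hI r.+1 (_ : 0 < r.+1 <= size C) _ hchk.
  rewrite hent hms => /(_ hr) H; lia.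
have hfin : i \in I_t L f x t.
  rewrite /I_t -/S -/C -(cat_take_drop r.+1 C) foldl_cat (take_nth (0,0) hr) foldl_rcons.
  by apply: foldl_mono; rewrite nth_index // hstep mem_rcons mem_head.
rewrite /alg_output; move: hfin; case: (I_t L f x t) => [//|b l] hb [hz hzS]; split => //.
by apply: hz.
Qed.
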